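(* Let $S\subseteq M_n$ and $T\subseteq M_{n'}$ be noncommutative graphs. Then (1) for every $n\times n$ unitary matrix $U$, $\mathcal{H}(S)=\mathcal{H}(U^\dagger SU)$, where $U^\dagger SU=\{U^\dagger AU: A\in S\}$; and (2) $\mathcal{H}(S\oplus T)=\mathcal{H}(S)+\mathcal{H}(T)$, where $S\oplus T=\{A\oplus B: A\in S, B\in T\}\subseteq M_{n+n'}$ is the space of block-diagonal matrices.
   Context: All scalars are complex; $M_n$ denotes complex $n\times n$ matrices. A noncommutative graph is a linear subspace $S\subseteq M_n$ that contains $I_n$ and is closed under conjugate transpose. For a subspace $S\subseteq M_n$, $M_m(S)$ denotes the set of $m\times m$ block matrices $B=[B_{i,j}]_{i,j\in[m]}$ with every block $B_{i,j}\in S$, viewed as elements of $M_{mn}$. The Haemers bound is $\mathcal{H}(S)=\min\{\mathrm{rk}(B):\ m\in\mathbb{N},\ B\in M_m(S),\ \sum_{i=1}^m B_{i,i}=I_n\}$. *)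

(* Defs.v *)
From HB Require Import structures.
From mathcomp Require Import all_boot all_order all_algebra.
From mathcomp Require Import boolp.
From mathcomp Require Import complex.
From mathcomp Require Import Rstruct.
Set Implicit Arguments. Unset Strict Implicit. Unset Printing Implicit Defensive.
Import Order.TTheory GRing.Theory Num.Theory.
Local Open Scope ring_scope.

Definition C : Type := complex Rdefinitions.R.

Definition adj {m n : nat} (A : 'M[C]_(m, n)) : 'M[C]_(n, m) :=
  (map_mx (fun z : C => z^*) A)^T.

Definition unitary {n : nat} (U : 'M[C]_n) : Prop :=
  adj U *m U = 1%:M /\ U *m adj U = 1%:M.

Definition ncgraph {n : nat} (S : {vspace 'M[C]_n}) : Prop :=
  (1%:M \in S) /\ (forall A, A \in S -> adj A \in S).

Definition conjsp {n : nat} (U : 'M[C]_n) (S : {vspace 'M[C]_n}) : {vspace 'M[C]_n} :=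
  (linfun (fun A : 'M[C]_n => adj U *m A *m U) @: S)%VS.

(* S (+) T = { A (+) B : A in S, B in T }
   = { A (+) 0 : A in S } + { 0 (+) B : B in T } *)
Definition dsumsp {n n' : nat} (S : {vspace 'M[C]_n}) (T : {vspace 'M[C]_n'})
  : {vspace 'M[C]_(n + n')} :=
  (linfun (fun A : 'M[C]_n => block_mx A 0 0 (0 : 'M[C]_n')) @: S
   + linfun (fun B : 'M[C]_n' => block_mx (0 : 'M[C]_n) 0 0 B) @: T)%VS.

Definition haemers_feasible {n : nat} (S : {vspace 'M[C]_n}) (r : nat) : Prop :=
  exists (m : nat) (F : 'I_m -> 'I_m -> 'M[C]_n),
    (forall i j, F i j \in S) /\
    \sum_(i < m) F i i = 1%:M /\
    \rank (\mxblock_(i < m, j < m) F i j) = r.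

Lemma haemers_ex_asbool {n : nat} (S : {vspace 'M[C]_n}) :
  (exists r, haemers_feasible S r) -> exists r, `[< haemers_feasible S r >].
Proof. by case=> r hr; exists r; apply/asboolP. Qed.

(* H(S) = min of the feasible ranks (0 by convention if there are none,
   which never happens for a noncommutative graph). *)
Definition haemers {n : nat} (S : {vspace 'M[C]_n}) : nat :=
  match pselect (exists r, haemers_feasible S r) with
  | left ex => ex_minn (haemers_ex_asbool ex)
  | right _ => 0%N
  end.

(* Main.v *)
Require Import Defs.
From HB Require Import structures.
From mathcomp Require Import all_boot all_order all_algebra.
From mathcomp Require Import boolp complex Rstruct.
Set Implicit Arguments. Unset Strict Implicit. Unset Printing Implicit Defensive.
Import Order.TTheory GRing.Theory Num.Theory.
Local Open Scope ring_scope.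

Lemma lfunE' (aT rT : vectType C) (f : aT -> rT) (hf : linear f) v :
  linfun f v = f v.
Proof.
pose ff : {linear aT -> rT} := HB.pack f (GRing.isLinear.Build _ _ _ _ f hf).
exact: (lfunE ff v).
Qed.
Lemma haemersP n (S : {vspace 'M[C]_n}) : (exists r, haemers_feasible S r) ->
  haemers_feasible S (haemers S) /\ forall r, haemers_feasible S r -> (haemers S <= r)%N.
Proof.
move=> ex; rewrite /haemers; case: pselect => // ex'.
case: ex_minnP => r /asboolP hr hmin; split => // r' /asboolP; exact: hmin.
Qed.

Lemma haemers_le n n2 (S : {vspace 'M[C]_n}) (S' : {vspace 'M[C]_n2}) :
  (exists r, haemers_feasible S r) ->
  (forall r, haemers_feasible S r -> exists2 r', haemers_feasible S' r' & (r' <= r)%N) ->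
  (haemers S' <= haemers S)%N.
Proof.
move=> ex H; have [f _] := haemersP ex.
have [r' f' le] := H _ f.
have [_ m'] := haemersP (ex_intro _ r' f').
exact: leq_trans (m' _ f') le.
Qed.

Lemma ncgraph_ex n (S : {vspace 'M[C]_n}) : ncgraph S -> exists r, haemers_feasible S r.
Proof.
case=> h1 _; exists (\rank (\mxblock_(i < 1, j < 1) (1%:M : 'M[C]_n))).
exists 1%N, (fun _ _ => 1%:M); split => //; split => //.
by rewrite big_ord1.
Qed.
Lemma sum_pick (R : pzRingType) m p q r (o : option 'I_m) (G : 'I_m -> 'M[R]_(q, r)) (X : 'M[R]_(p, q)) :
  \sum_(i < m) (if o == Some i then X else 0%R) *m G i =
  match o with Some i => X *m G i | None => 0 end.
Proof.
case: o => [i0|]; last by rewrite big1 // => i _; rewrite mul0mx.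
rewrite (bigD1 i0) //= eqxx big1 ?addr0 // => i /negPf ne.
by rewrite (_ : (Some i0 == Some i) = false) ?mul0mx //; apply/eqP => -[] e; move: ne; rewrite e eqxx.
Qed.

Lemma sum_pickr (R : pzRingType) m p q r (o : option 'I_m) (G : 'I_m -> 'M[R]_(p, q)) (Y : 'M[R]_(q, r)) :
  \sum_(i < m) G i *m (if o == Some i then Y else 0%R) =
  match o with Some i => G i *m Y | None => 0 end.
Proof.
case: o => [i0|]; last by rewrite big1 // => i _; rewrite mulmx0.
rewrite (bigD1 i0) //= eqxx big1 ?addr0 // => i /negPf ne.
by rewrite (_ : (Some i0 == Some i) = false) ?mulmx0 //; apply/eqP => -[] e; move: ne; rewrite e eqxx.
Qed.

Definition selmx m2 m p q (g : 'I_m2 -> option 'I_m) (X : 'M[C]_(p,q)) :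
  'M[C]_(\sum_(k < m2) p, \sum_(i < m) q) :=
  \mxblock_(k < m2, i < m) (if g k == Some i then X else 0%R).
Definition selmxr m2 m q q2 (g : 'I_m2 -> option 'I_m) (Y : 'M[C]_(q,q2)) :
  'M[C]_(\sum_(j < m) q, \sum_(l < m2) q2) :=
  \mxblock_(j < m, l < m2) (if g l == Some j then Y else 0%R).

Lemma block_reindex_eq (m m2 p q p2 q2 : nat) (F : 'I_m -> 'I_m -> 'M[C]_(p,q))
  (g : 'I_m2 -> option 'I_m) (X : 'M[C]_(p2,p)) (Y : 'M[C]_(q,q2)) :
  \mxblock_(k < m2, l < m2) (match g k, g l with Some i, Some j => X *m F i j *m Y | _, _ => (0%R : 'M[C]_(p2,q2)) end)
   = selmx g X *m \mxblock_(i < m, j < m) F i j *m selmxr g Y.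
Proof.
rewrite /selmx /selmxr !mul_mxblock; apply/eq_mxblock => k l.
under eq_bigr do rewrite sum_pick.
rewrite sum_pickr.
by case: (g k) => [i|]; case: (g l) => [j|] //; rewrite mul0mx.
Qed.

Lemma block_reindex_rank (m m2 p q p2 q2 : nat) (F : 'I_m -> 'I_m -> 'M[C]_(p,q))
  (g : 'I_m2 -> option 'I_m) (X : 'M[C]_(p2,p)) (Y : 'M[C]_(q,q2)) :
  (\rank (\mxblock_(k < m2, l < m2) (match g k, g l with Some i, Some j => X *m F i j *m Y | _, _ => (0%R : 'M[C]_(p2,q2)) end))
   <= \rank (\mxblock_(i < m, j < m) F i j))%N.
Proof.
rewrite block_reindex_eq.
exact: leq_trans (mxrankM_maxl _ _) (mxrankM_maxr _ _).
Qed.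

Lemma conj_lin n (X Y : 'M[C]_n) : linear (fun A : 'M[C]_n => X *m A *m Y).
Proof. by move=> a A B /=; rewrite mulmxDr mulmxDl -scalemxAr -scalemxAl. Qed.

Lemma conj_step n (S S' : {vspace 'M[C]_n}) (X Y : 'M[C]_n) :
  X *m Y = 1%:M ->
  (forall A, A \in S -> X *m A *m Y \in S') ->
  forall r, haemers_feasible S r -> exists2 r', haemers_feasible S' r' & (r' <= r)%N.
Proof.
move=> XY hS r [m [F [hF [hsum <-]]]].
exists (\rank (\mxblock_(i < m, j < m) (X *m F i j *m Y))); last first.
  exact: (block_reindex_rank F (fun i => Some i) X Y).
exists m, (fun i j => X *m F i j *m Y); split; first by move=> i j; apply: hS.
split => //.
by rewrite -mulmx_suml -mulmx_sumr hsum mulmx1 XY.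
Qed.

Lemma part1 n (S : {vspace 'M[C]_n}) (U : 'M[C]_n) :
  ncgraph S -> unitary U -> haemers S = haemers (conjsp U S).
Proof.
move=> hS [h1 h2].
have memc A : A \in S -> adj U *m A *m U \in conjsp U S.
  move=> hA; have := memv_img (linfun (fun A : 'M[C]_n => adj U *m A *m U)) hA.
  by rewrite lfunE' //; apply: conj_lin.
have exS := ncgraph_ex hS.
apply/eqP; rewrite eqn_leq; apply/andP; split; last first.
  apply: haemers_le => //; exact: conj_step h1 memc.
have [r fr] := exS.
have [r' fr' _] := conj_step h1 memc fr.
apply: haemers_le; first by exists r'.

apply: (conj_step h2) => A /memv_imgP [B hB ->].
rewrite lfunE'; last exact: conj_lin.
by rewrite !mulmxA h2 mul1mx -mulmxA h2 mulmx1.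
Qed.
Section Blk.
Variables n n' : nat.
Definition Lm : 'M[C]_(n, n + n') := row_mx 1%:M 0.
Definition Ltm : 'M[C]_(n + n', n) := col_mx 1%:M 0.
Definition Rm : 'M[C]_(n', n + n') := row_mx 0 1%:M.
Definition Rtm : 'M[C]_(n + n', n') := col_mx 0 1%:M.

Lemma blk_decomp (a : 'M[C]_n) (b : 'M[C]_n') :
  block_mx a 0 0 b = Ltm *m a *m Lm + Rtm *m b *m Rm.
Proof.
rewrite -!mulmxA /Ltm /Lm /Rtm /Rm !mul_mx_row !mulmx1 !mulmx0 !mul_col_mx !mul1mx !mul0mx add_row_mx addr0 add0r block_mxEh.
by [].
Qed.

Lemma LLt : Lm *m Ltm = 1%:M.
Proof. by rewrite /Lm /Ltm mul_row_col mulmx1 mul0mx addr0. Qed.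
Lemma LRt : Lm *m Rtm = 0.
Proof. by rewrite /Lm /Rtm mul_row_col mulmx0 mul0mx addr0. Qed.
Lemma RLt : Rm *m Ltm = 0.
Proof. by rewrite /Rm /Ltm mul_row_col mulmx0 mul0mx addr0. Qed.
Lemma RRt : Rm *m Rtm = 1%:M.
Proof. by rewrite /Rm /Rtm mul_row_col mulmx1 mul0mx add0r. Qed.

Lemma projL (a : 'M[C]_n) (b : 'M[C]_n') : Lm *m block_mx a 0 0 b *m Ltm = a.
Proof.
by rewrite blk_decomp mulmxDr mulmxDl !mulmxA LLt LRt mul1mx mul0mx -!mulmxA LLt RLt mulmx1 !mulmx0 addr0.
Qed.
Lemma projR (a : 'M[C]_n) (b : 'M[C]_n') : Rm *m block_mx a 0 0 b *m Rtm = b.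
Proof.
by rewrite blk_decomp mulmxDr mulmxDl !mulmxA RLt RRt mul1mx mul0mx -!mulmxA LRt RRt mulmx1 !mulmx0 add0r.
Qed.
Lemma projLR (a : 'M[C]_n) (b : 'M[C]_n') : Lm *m block_mx a 0 0 b *m Rtm = 0.
Proof.
by rewrite blk_decomp mulmxDr mulmxDl !mulmxA LLt LRt mul1mx mul0mx -!mulmxA LRt RRt mulmx1 !mulmx0 addr0.
Qed.
Lemma projRL (a : 'M[C]_n) (b : 'M[C]_n') : Rm *m block_mx a 0 0 b *m Ltm = 0.
Proof.
by rewrite blk_decomp mulmxDr mulmxDl !mulmxA RLt RRt mul1mx mul0mx -!mulmxA LLt RLt mulmx1 !mulmx0 add0r.
Qed.

Lemma linL : linear (fun A : 'M[C]_n => block_mx A 0 0 (0 : 'M[C]_n')).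
Proof. by move=> a A B; rewrite scale_block_mx add_block_mx !scaler0 !addr0. Qed.
Lemma linR : linear (fun B : 'M[C]_n' => block_mx (0 : 'M[C]_n) 0 0 B).
Proof. by move=> a A B; rewrite scale_block_mx add_block_mx !scaler0 !addr0. Qed.

Lemma dsum_mem (S : {vspace 'M[C]_n}) (T : {vspace 'M[C]_n'}) a b :
  a \in S -> b \in T -> block_mx a 0 0 b \in dsumsp S T.
Proof.
move=> ha hb.
have -> : block_mx a 0 0 b = block_mx a 0 0 0 + block_mx 0 0 0 b.
  by rewrite add_block_mx !addr0 add0r.
apply: memv_add.
  by have := memv_img (linfun (fun A : 'M[C]_n => block_mx A 0 0 (0 : 'M[C]_n'))) ha; rewrite lfunE' //; apply: linL.
by have := memv_img (linfun (fun B : 'M[C]_n' => block_mx (0 : 'M[C]_n) 0 0 B)) hb; rewrite lfunE' //; apply: linR.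
Qed.

Lemma dsum_inv (S : {vspace 'M[C]_n}) (T : {vspace 'M[C]_n'}) G :
  G \in dsumsp S T -> exists a b, [/\ a \in S, b \in T & G = block_mx a 0 0 b].
Proof.
move=> /memv_addP [u /memv_imgP [a ha ->] [v /memv_imgP [b hb ->] ->]].
exists a, b; split => //.
rewrite !lfunE'; [|exact: linR|exact: linL].
by rewrite add_block_mx !addr0 add0r.
Qed.
End Blk.
Lemma one_ex n (S : {vspace 'M[C]_n}) : 1%:M \in S -> exists r, haemers_feasible S r.
Proof.
move=> h1; exists (\rank (\mxblock_(i < 1, j < 1) (1%:M : 'M[C]_n))).
exists 1%N, (fun _ _ => 1%:M); split => //; split => //.
by rewrite big_ord1.
Qed.

Lemma blkL n n' (a : 'M[C]_n) : Ltm n n' *m a *m Lm n n' = block_mx a 0 0 0.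
Proof. by rewrite blk_decomp mulmx0 mul0mx addr0. Qed.
Lemma blkR n n' (b : 'M[C]_n') : Rtm n n' *m b *m Rm n n' = block_mx 0 0 0 b.
Proof. by rewrite blk_decomp mulmx0 mul0mx add0r. Qed.

Lemma part2 n n' (S : {vspace 'M[C]_n}) (T : {vspace 'M[C]_n'}) :
  ncgraph S -> ncgraph T -> haemers (dsumsp S T) = (haemers S + haemers T)%N.
Proof.
move=> hS hT.
have exS := ncgraph_ex hS; have exT := ncgraph_ex hT.
have exD : exists r, haemers_feasible (dsumsp S T) r.
  apply: one_ex; rewrite (scalar_mx_block n n'); apply: dsum_mem; [exact: hS.1|exact: hT.1].
have [fS minS] := haemersP exS; have [fT minT] := haemersP exT.
have [fD minD] := haemersP exD.
apply/eqP; rewrite eqn_leq; apply/andP; split.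
- move: fS fT => [m [A [hA [sA rA]]]] [m' [B [hB [sB rB]]]].
  pose gl := fun k : 'I_(m + m') => match split k with inl i => Some i | inr _ => None end.
  pose gr := fun k : 'I_(m + m') => match split k with inl _ => None | inr i => Some i end.
  pose G k l := match split k, split l with
     | inl i, inl j => Ltm n n' *m A i j *m Lm n n'
     | inr i, inr j => Rtm n n' *m B i j *m Rm n n'
     | _, _ => 0%R end.
  have eG : \mxblock_(k < m + m', l < m + m') G k l =
     \mxblock_(k < m + m', l < m + m') (match gl k, gl l with Some i, Some j => Ltm n n' *m A i j *m Lm n n' | _, _ => (0%R : 'M[C]_(n + n')) end) +
     \mxblock_(k < m + m', l < m + m') (match gr k, gr l with Some i, Some j => Rtm n n' *m B i j *m Rm n n' | _, _ => (0%R : 'M[C]_(n + n')) end).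
    rewrite -mxblockD; apply/eq_mxblock => k l; rewrite /G /gl /gr.
    by case: (split k) => i; case: (split l) => j; rewrite ?addr0 ?add0r.
  apply: leq_trans (minD _ _) _.
    exists (m + m'), G; split.
      move=> k l; rewrite /G; case: (split k) => i; case: (split l) => j; rewrite ?mem0v //.
        by rewrite blkL; apply: dsum_mem => //; apply: mem0v.
      by rewrite blkR; apply: dsum_mem => //; apply: mem0v.
    split => //.
    rewrite big_split_ord /=.
    have sl (i : 'I_m) : split (lshift m' i) = inl i := unsplitK (inl i).
    have sr (i : 'I_m') : split (rshift m i) = inr i := unsplitK (inr i).
    rewrite /G; under eq_bigr do rewrite sl; under [X in _ + X]eq_bigr do rewrite sr.
    rewrite -!mulmx_suml -!mulmx_sumr sA sB !mulmx1.
    have := blk_decomp (1%:M : 'M[C]_n) (1%:M : 'M[C]_n'); rewrite !mulmx1 => <-.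
    by rewrite -scalar_mx_block.
  rewrite eG; apply: leq_trans (mxrank_add _ _) _; rewrite -rA -rB.
  by apply: leq_add; apply: block_reindex_rank.
- move: fD => [m [G [hG [sG rG]]]].
  pose A i j := Lm n n' *m G i j *m Ltm n n'.
  pose B i j := Rm n n' *m G i j *m Rtm n n'.
  have hGij i j : [/\ A i j \in S, B i j \in T & G i j = block_mx (A i j) 0 0 (B i j)].
    have [a [b [ha hb e]]] := dsum_inv (hG i j).
    by rewrite /A /B e projL projR.
  have fA : haemers_feasible S (\rank (\mxblock_(i < m, j < m) A i j)).
    exists m, A; split; first by move=> i j; have [] := hGij i j.
    split => //; rewrite /A -mulmx_suml -mulmx_sumr sG mulmx1; exact: LLt.
  have fB : haemers_feasible T (\rank (\mxblock_(i < m, j < m) B i j)).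
    exists m, B; split; first by move=> i j; have [] := hGij i j.
    split => //; rewrite /B -mulmx_suml -mulmx_sumr sG mulmx1; exact: RRt.
  apply: leq_trans (leq_add (minS _ fA) (minT _ fB)) _.
  rewrite -rank_diag_block_mx -rG.
  suff -> : block_mx (\mxblock_(i < m, j < m) A i j) 0 0 (\mxblock_(i < m, j < m) B i j) =
     col_mx (selmx (fun i => Some i) (Lm n n')) (selmx (fun i => Some i) (Rm n n')) *m \mxblock_(i < m, j < m) G i j *m
     row_mx (selmxr (fun i => Some i) (Ltm n n')) (selmxr (fun i => Some i) (Rtm n n')).
    exact: leq_trans (mxrankM_maxl _ _) (mxrankM_maxr _ _).
  rewrite mul_col_mx mul_col_row.
  rewrite -(block_reindex_eq G (fun i => Some i) (Lm n n') (Ltm n n')).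
  rewrite -(block_reindex_eq G (fun i => Some i) (Lm n n') (Rtm n n')).
  rewrite -(block_reindex_eq G (fun i => Some i) (Rm n n') (Ltm n n')).
  rewrite -(block_reindex_eq G (fun i => Some i) (Rm n n') (Rtm n n')).
  congr block_mx.
    by apply/matrixP => x y; rewrite /mxblock [RHS]mxE; have [_ _ ->] := hGij (tagnat.sig1 x) (tagnat.sig1 y); rewrite projLR !mxE.
  by apply/matrixP => x y; rewrite /mxblock [RHS]mxE; have [_ _ ->] := hGij (tagnat.sig1 x) (tagnat.sig1 y); rewrite projRL !mxE.
Qed.

Theorem mainTheorem8 (n n' : nat) (S : {vspace 'M[C]_n}) (T : {vspace 'M[C]_n'}) :
  ncgraph S -> ncgraph T ->
  (forall U : 'M[C]_n, unitary U -> haemers S = haemers (conjsp U S)) /\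
  haemers (dsumsp S T) = (haemers S + haemers T)%N.
Proof.
move=> hS hT; split; last exact: part2.
by move=> U hU; apply: part1.
Qed.
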